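(* Assume the language contains infinitely many atoms (of a given sort) and no restriction is placed on the atoms allowed in generalizations. Then anti-unification for nominal terms-in-context is of nullary type: there exist two terms-in-context $p_1,p_2$ that have no minimal complete set of generalizations (in particular, they have no least general generalization).
   Context: Nominal terms $t::=f(t_1,\dots,t_n)\mid a\mid a.t\mid \pi\cdot X$ over sorted atoms $a,b,\dots$, variables $X,Y,\dots$ and function symbols; $\pi$ ranges over permutations (finite sequences of swappings $(a\,b)$ of same-sorted atoms), $\pi\bullet t$ is the swapping action, substitutions $\sigma$ map variables to terms (application allows atom capture and $(\pi\cdot X)\sigma=\pi\bullet(X\sigma)$). A freshness context is a finite set of constraints $a\# X$; $\nabla\vdash a\# t$ and $\nabla\vdash t\approx t'$ are the standard nominal freshness and $\alpha$-equivalence judgments (Urban–Pitts–Gabbay): $\nabla\vdash a\approx a$; $\nabla\vdash a.t\approx a.t'$ if $\nabla\vdash t\approx t'$; $\nabla\vdash a.t\approx a'.t'$ if $a\neq a'$, $\nabla\vdash t\approx(a\,a')\bullet t'$ and $\nabla\vdash a\# t'$; $\nabla\vdash\pi\cdot X\approx\pi'\cdot X$ if $a\# X\in\nabla$ for all $a$ with $\pi\bullet a\neq\pi'\bullet a$; applications componentwise; $\nabla\vdash a\# a'$ if $a\ne a'$; $\nabla\vdash a\#\pi\cdot X$ if $\pi^{-1}\bullet a\# X\in\nabla$; $a\#$ distributes over applications; $\nabla\vdash a\# a.t$; $\nabla\vdash a\# a'.t$ if $a\ne a'$ and $\nabla\vdash a\# t$. For a freshness context $\nabla$ and substitution $\sigma$,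 $\nabla\sigma$ is the minimal freshness context $\Delta$ with $\Delta\vdash a\# X\sigma$ for all $a\# X\in\nabla$ (computed by the standard simplification of freshness formulas; undefined/$\bot$ if none exists). $\sigma$ respects $\nabla$ if for all $X$, no atom $a$ with $a\# X\in\nabla$ occurs free in $X\sigma$ outside suspensions. A term-in-context is a pair $\langle\nabla,t\rangle$. $\langle\nabla_1,t_1\rangle\preceq\langle\nabla_2,t_2\rangle$ if there is a substitution $\sigma$ respecting $\nabla_1$ with $\nabla_1\sigma\subseteq\nabla_2$ and $\nabla_2\vdash t_1\sigma\approx t_2$. A generalization of $p_1,p_2$ is a term-in-context $p$ with $p\preceq p_1$ and $p\preceq p_2$. A complete set of generalizations of $p_1,p_2$ is a set $G$ of generalizations such that every generalization $p$ of $p_1,p_2$ satisfies $p\preceq q$ for some $q\in G$; it is minimal if no two distinct elements of $G$ are related by $\preceq$. Anti-unification is of nullary type if some pair of terms-in-context has no minimal complete set of generalizations. *)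

(* Defs.v *)
From mathcomp Require Import all_boot.
From Stdlib Require Import List.

Set Implicit Arguments.
Unset Strict Implicit.
Unset Printing Implicit Defensive.

Record lang := Lang {
  atom : eqType;
  srt : Type;
  asort : atom -> srt;
  fsym : Type
}.

Definition var := nat.

Section Nominal.
Context (L : lang).
Local Notation A := (atom L).

(* permutations: finite sequences of swappings *)
Definition perm := list (A * A).

Definition swap_atom (a b c : A) : A :=
  if c == a then b else if c == b then a else c.

Fixpoint perm_act (p : perm) (c : A) : A :=
  match p with
  | nil => c
  | (a, b) :: p' => swap_atom a b (perm_act p' c)
  end.

Definition perm_inv (p : perm) : perm := rev p.

Definition wf_perm (p : perm) : Prop :=
  forall a b, In (a, b) p -> asort a = asort b.

Inductive term : Type :=
  | Fn : fsym L -> list term -> term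
  | At : A -> term
  | Ab : A -> term -> term
  | Su : perm -> var -> term.

Fixpoint wf_term (t : term) : Prop :=
  match t with
  | Fn _ ts => (fix go (l : list term) : Prop :=
                  match l with nil => True | u :: l' => wf_term u /\ go l' end) ts
  | At _ => True
  | Ab _ u => wf_term u
  | Su p _ => wf_perm p
  end.

Fixpoint perm_term (p : perm) (t : term) : term :=
  match t with
  | Fn f ts => Fn f (map (perm_term p) ts)
  | At a => At (perm_act p a)
  | Ab a u => Ab (perm_act p a) (perm_term p u)
  | Su q X => Su (p ++ q) X
  end.

Definition subst := var -> term.

Fixpoint subst_app (s : subst) (t : term) : term :=
  match t with
  | Fn f ts => Fn f (map (subst_app s) ts)
  | At a => At a
  | Ab a u => Ab a (subst_app s u)
  | Su p X => perm_term p (s X)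
  end.

Definition wf_subst (s : subst) : Prop := forall X, wf_term (s X).

(* freshness contexts: finite sets of constraints a # X *)
Definition fctx := list (A * var).

Definition fctx_sub (D1 D2 : fctx) : Prop := forall c, In c D1 -> In c D2.

Inductive fresh (D : fctx) (a : A) : term -> Prop :=
  | fr_atom : forall b, a <> b -> fresh D a (At b)
  | fr_susp : forall p X, In (perm_act (perm_inv p) a, X) D -> fresh D a (Su p X)
  | fr_fn : forall f ts, Forall (fresh D a) ts -> fresh D a (Fn f ts)
  | fr_ab_same : forall t, fresh D a (Ab a t)
  | fr_ab_diff : forall b t, a <> b -> fresh D a t -> fresh D a (Ab b t).

Inductive alpha (D : fctx) : term -> term -> Prop :=
  | al_atom : forall a, alpha D (At a) (At a)
  | al_ab_same : forall a t t', alpha D t t' -> alpha D (Ab a t) (Ab a t')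
  | al_ab_diff : forall a a' t t', a <> a' -> asort a = asort a' ->
      alpha D t (perm_term ((a, a') :: nil) t') -> fresh D a t' ->
      alpha D (Ab a t) (Ab a' t')
  | al_susp : forall p p' X,
      (forall a, perm_act p a <> perm_act p' a -> In (a, X) D) ->
      alpha D (Su p X) (Su p' X)
  | al_fn : forall f ts ts', Forall2 (alpha D) ts ts' -> alpha D (Fn f ts) (Fn f ts').

(* standard simplification of a freshness formula a # t into a minimal
   freshness context (None = unsatisfiable) *)
Fixpoint fresh_simp (a : A) (t : term) : option fctx :=
  match t with
  | At b => if a == b then None else Some nil
  | Su p X => Some ((perm_act (perm_inv p) a, X) :: nil)
  | Fn _ ts =>
      (fix go (l : list term) : option fctx :=
         match l with
         | nil => Some nil
         | u :: l' => match fresh_simp a u, go l' with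
                      | Some d1, Some d2 => Some (d1 ++ d2)
                      | _, _ => None
                      end
         end) ts
  | Ab b u => if a == b then Some nil else fresh_simp a u
  end.

(* D sigma : minimal context entailing a # X sigma for all a # X in D *)
Fixpoint fctx_subst (D : fctx) (s : subst) : option fctx :=
  match D with
  | nil => Some nil
  | (a, X) :: D' => match fresh_simp a (s X), fctx_subst D' s with
                    | Some d1, Some d2 => Some (d1 ++ d2)
                    | _, _ => None
                    end
  end.

Fixpoint occurs_free (a : A) (t : term) : Prop :=
  match t with
  | Fn _ ts => (fix go (l : list term) : Prop :=
                  match l with nil => False | u :: l' => occurs_free a u \/ go l' end) ts
  | At b => a = b
  | Ab b u => a <> b /\ occurs_free a u
  | Su _ _ => False
  end.

Definition respects (s : subst) (D : fctx) : Prop :=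
  forall a X, In (a, X) D -> ~ occurs_free a (s X).

Definition tic := (fctx * term)%type.

Definition wf_tic (p : tic) : Prop := wf_term p.2.

Definition more_general (p q : tic) : Prop :=
  exists s : subst, wf_subst s /\ respects s p.1 /\
    (exists D, fctx_subst p.1 s = Some D /\ fctx_sub D q.1) /\
    alpha q.1 (subst_app s p.2) q.2.

Definition generalization (p1 p2 p : tic) : Prop :=
  wf_tic p /\ more_general p p1 /\ more_general p p2.

Definition complete_set (p1 p2 : tic) (G : tic -> Prop) : Prop :=
  (forall q, G q -> generalization p1 p2 q) /\
  (forall p, generalization p1 p2 p -> exists q, G q /\ more_general p q).

Definition minimal_complete_set (p1 p2 : tic) (G : tic -> Prop) : Prop :=
  complete_set p1 p2 G /\
  (forall q q', G q -> G q' -> q <> q' -> ~ more_general q q').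

Definition nullary_AU : Prop :=
  exists p1 p2 : tic, wf_tic p1 /\ wf_tic p2 /\
    ~ exists G, minimal_complete_set p1 p2 G.

End Nominal.

Definition infinitely_many_atoms (L : lang) (s : srt L) : Prop :=
  forall l : list (atom L), exists a, asort a = s /\ ~ In a l.

(* Main.v *)
Require Import Defs.
From mathcomp Require Import all_boot.
From Stdlib Require Import List.

Section H.
Context {L : lang}.
Local Notation A := (atom L).

Fixpoint atoms (p : perm L) : list A :=
  match p with nil => nil | (x, y) :: p' => x :: y :: atoms p' end.

Lemma perm_act_app (p q : perm L) x : perm_act (p ++ q) x = perm_act p (perm_act q x).
Proof. elim: p => [//|[u v] p IH] /=; by rewrite IH. Qed.

Lemma swapK (u v x : A) : swap_atom u v (swap_atom u v x) = x.
Proof.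
rewrite /swap_atom.
case: (eqVneq x u) => [->|H1]; rewrite ?eqxx.
  by case: (eqVneq v u) => [->|H2]; rewrite ?eqxx.
by case: (eqVneq x v) => [->|H3]; rewrite ?eqxx ?(negbTE H3) ?(negbTE H1).
Qed.

Lemma perm_revK (p : perm L) x : perm_act (rev p) (perm_act p x) = x.
Proof.
elim: p x => [//|[u v] p IH] x /=.
by rewrite perm_act_app /= swapK IH.
Qed.

Lemma perm_inj (p : perm L) x y : perm_act p x = perm_act p y -> x = y.
Proof. move=> H; by rewrite -(perm_revK p x) H perm_revK. Qed.

Lemma perm_fresh (p : perm L) c : ~ In c (atoms p) -> perm_act p c = c.
Proof.
elim: p => [//|[u v] p IH] /= Hn.
rewrite IH; last by move=> H; apply: Hn; right; right.
rewrite /swap_atom.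
case: (c =P u) => [Hu|_]; first by exfalso; apply: Hn; left.
case: (c =P v) => [Hv|_] //; by exfalso; apply: Hn; right; left.
Qed.

Lemma alpha_At {D : fctx L} {t a} : alpha D t (At a) -> t = At a.
Proof. move=> H; remember (At a) as u; destruct H; try discriminate; auto. Qed.

Lemma perm_term_At {p : perm L} {t a} : perm_term p t = At a -> exists d, t = At d /\ perm_act p d = a.
Proof. destruct t => //= [[<-]]; eauto. Qed.

Lemma gen_form {a b : A} {p : tic L} : a <> b ->
  generalization (nil, At a) (nil, At b) p -> exists D pi X, p = (D, Su pi X).
Proof.
move=> Hab; destruct p as [D t].
move=> [_ [[s1 [_ [_ [_ H1]]]] [s2 [_ [_ [_ H2]]]]]] /=.
simpl in H1, H2.
move/alpha_At: H1 => H1; move/alpha_At: H2 => H2.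
destruct t => //=; simpl in H1, H2; try discriminate.
- exfalso; apply: Hab; case: H1 => <-; by case: H2.
- eauto.
Qed.

Lemma step {D : fctx L} { pi : perm L } {X : var} {c a : A} :
  more_general (D, Su pi X) (nil, At a) ->
  ~ In c (atoms pi) -> c <> a ->
  more_general ((c, X) :: D, Su pi X) (nil, At a).
Proof.
move=> [s [w [r [[D1 [E S]] Al]]]] Hc Hca.
simpl in *.
have [d [Hd Hpd]] := perm_term_At (alpha_At Al).
have Hcd : c <> d.
  move=> Hcd; apply: Hca; by rewrite -Hpd -Hcd perm_fresh.
exists s; split => //; split.
  move=> a0 Y /= [[<- <-]|Hin]; last by apply: r.
  by rewrite Hd /=.
split => //.
exists D1; split => //=.
by rewrite Hd /= (introF eqP Hcd) E.
Qed.

Lemma no_back {D : fctx L} { pi : perm L } {X : var} {c : A} :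
  ~ In (c, X) D -> ~ more_general ((c, X) :: D, Su pi X) (D, Su pi X).
Proof.
move=> Hn [s [_ [_ [[Dd [E S]] Al]]]].
simpl in *.
destruct (s X) as [f ts|d|d u|rho Y] eqn:Hs; simpl in Al; inversion Al; subst.
move: E; rewrite /=.
destruct (fctx_subst D s) => //= [[E]].
have Hin : In (perm_act (perm_inv rho) c, X) D by apply: S; rewrite -E; left.
case: (perm_act rho c =P c) => [Hrc|Hrc].
  apply: Hn; move: Hin; by rewrite /perm_inv -{1}Hrc perm_revK.
apply: Hn; apply: H0.
rewrite perm_act_app => /perm_inj; exact: Hrc.
Qed.

End H.

Theorem theorem2 (L : lang) (s : srt L) :
  infinitely_many_atoms s -> nullary_AU L.
Proof.
move=> Hinf.
have [a [_ _]] := Hinf nil.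
have [b [_ Hb]] := Hinf (a :: nil).
have Hab : a <> b by move=> E; apply: Hb; left.
exists (nil, At a), (nil, At b); split; first exact I; split; first exact I.
move=> [G [[Hgen Hcompl] Hmin]].
have g0 : generalization (nil, At a) (nil, At b) (nil, Su nil 0).
  split; first by move=> u v [].
  split.
  - exists (fun _ => At a); split; first by move=> ?.
    split; first by move=> ? ? [].
    split; first by exists nil; split => // ? [].
    constructor.
  - exists (fun _ => At b); split; first by move=> ?.
    split; first by move=> ? ? [].
    split; first by exists nil; split => // ? [].
    constructor.
have [q [Gq _]] := Hcompl _ g0.
have Hq := Hgen q Gq.
have [D [pi [X Eq]]] := gen_form Hab Hq.
subst q.
have [c [_ Hc]] := Hinf (a :: b :: map fst D ++ atoms pi).
have Hca : c <> a by move=> E; apply: Hc; left.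
have Hcb : c <> b by move=> E; apply: Hc; right; left.
have HcD : ~ In (c, X) D.
  move=> H; apply: Hc; right; right; apply: in_or_app; left.
  by apply: (in_map fst) H.
have Hcpi : ~ In c (atoms pi).
  move=> H; apply: Hc; right; right; apply: in_or_app; by right.
have Hq' : generalization (nil, At a) (nil, At b) ((c, X) :: D, Su pi X).
  move: Hq => [w [m1 m2]]; split => //; split.
  - exact: (step m1 Hcpi Hca).
  - exact: (step m2 Hcpi Hcb).
have [q'' [Gq'' Hle]] := Hcompl _ Hq'.
have Hle2 : more_general (D, Su pi X) q''.
  move: Hle => [s0 [w [r [[Dd [E S]] Al]]]].
  exists s0; split => //; split.
    move=> a0 Y H; apply: r; by right.
  split => //.
  move: E => /=.
  destruct (fresh_simp c (s0 X)) => //.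
  destruct (fctx_subst D s0) as [l0|] => //= [[E]].
  exists l0; split => //.
  move=> x Hx; apply: S; rewrite -E; apply: in_or_app; by right.
have Hne : ~ ((D, Su pi X) <> q'').
  move=> Hn; exact: (Hmin _ _ Gq Gq'' Hn Hle2).
apply: Hne => Heq.
rewrite -Heq in Hle.
exact: (no_back HcD Hle).
Qed.
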